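(* Let the Hamiltonians satisfy (H) and $F$ satisfy (F). Fix $n\ge0$, let $(U_i^{\alpha,n})_{\alpha,i}$ be given (with $U_0^{\alpha,n}=U_0^n$ for all $\alpha$) and compute $(U_i^{\alpha,n+1})_{\alpha,i}$ by the scheme (S). If there is $K\in\mathbb R$ with $K\le W_i^{\alpha,n}$ for all $i\ge0$ and $\alpha=1,\dots,N$, then $$\pi_\alpha^-(-K)\le p_{i,+}^{\alpha,n}\le\pi_\alpha^+(-K)\quad(i\ge1,\ \alpha=1,\dots,N),\qquad \underline p_\alpha(-K)\le p_{0,+}^{\alpha,n}\le\pi_\alpha^+(-K)\quad(\alpha=1,\dots,N).$$
   Context: Hamiltonians (H): $H_\alpha:\mathbb R\to\mathbb R$, $\alpha=1,\dots,N$, are Lipschitz continuous, coercive and quasi-convex (sublevel sets convex). There is $p_0^\alpha$ with $H_\alpha$ non-increasing on $(-\infty,p_0^\alpha]$ and non-decreasing on $[p_0^\alpha,\infty)$; $H_\alpha^-(p)=H_\alpha(\min(p,p_0^\alpha))$, $H_\alpha^+(p)=H_\alpha(\max(p,p_0^\alpha))$; $A_\alpha=\min_{\mathbb R}H_\alpha$. Junction function (F): $F:\mathbb R^N\to\mathbb R$ is piecewise $C^1$, strictly decreasing in each variable $p_\alpha$, and $F(p)\to+\infty$ as $(p_1)_-+\dots+(p_N)_-\to+\infty$ ($r_-=\max(-r,0)$). Generalized inverses: $\pi_\alpha^+(a)=\sup\{p:H_\alpha^+(p)=\max(a,A_\alpha)\}$, $\pi_\alpha^-(a)=\inf\{p:H_\alpha^-(p)=\max(a,A_\alpha)\}$.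 For every $K$ there is $\underline p(K)\in\mathbb R^N$ such that $F(p)\le K$ implies $p_\alpha\ge\underline p_\alpha(K)$ for all $\alpha$; such a choice is fixed. Scheme (S) (one time step): $p_{i,+}^{\alpha,n}=(U_{i+1}^{\alpha,n}-U_i^{\alpha,n})/\Delta x$, $p_{i,-}^{\alpha,n}=(U_i^{\alpha,n}-U_{i-1}^{\alpha,n})/\Delta x$; $\frac{U_i^{\alpha,n+1}-U_i^{\alpha,n}}{\Delta t}+\max\{H_\alpha^+(p_{i,-}^{\alpha,n}),H_\alpha^-(p_{i,+}^{\alpha,n})\}=0$ for $i\ge1$; $\frac{U_0^{n+1}-U_0^n}{\Delta t}+F(p_{0,+}^{1,n},\dots,p_{0,+}^{N,n})=0$. $W_i^{\alpha,n}=(U_i^{\alpha,n+1}-U_i^{\alpha,n})/\Delta t$. *)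

(* Defs.v *)
From Stdlib Require Import Reals Lra Lia List ClassicalEpsilon.
Open Scope R_scope.

(* Supremum / infimum of a set of reals (meaningful when a lub exists). *)
Definition Rsup (E : R -> Prop) : R :=
  epsilon (inhabits 0%R) (fun l => is_lub E l).
Definition Rinf (E : R -> Prop) : R := - Rsup (fun x => E (- x)).

Definition Lipschitz (H : R -> R) : Prop :=
  exists L, forall x y, Rabs (H x - H y) <= L * Rabs (x - y).
Definition coercive (H : R -> R) : Prop :=
  forall M, exists Rr, forall p, Rr < Rabs p -> M < H p.
Definition quasi_convex (H : R -> R) : Prop :=
  forall lam x y t, H x <= lam -> H y <= lam -> 0 <= t <= 1 ->
    H (t * x + (1 - t) * y) <= lam.
Definition nonincreasing_on_le (H : R -> R) (p0 : R) : Prop :=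
  forall x y, x <= y <= p0 -> H y <= H x.
Definition nondecreasing_on_ge (H : R -> R) (p0 : R) : Prop :=
  forall x y, p0 <= x <= y -> H x <= H y.

Definition Hminus (H : R -> R) (p0 : R) (p : R) : R := H (Rmin p p0).
Definition Hplus  (H : R -> R) (p0 : R) (p : R) : R := H (Rmax p p0).
Definition Amin (H : R -> R) : R := Rinf (fun y => exists p, y = H p).

Definition pi_plus (H : R -> R) (p0 a : R) : R :=
  Rsup (fun p => Hplus H p0 p = Rmax a (Amin H)).
Definition pi_minus (H : R -> R) (p0 a : R) : R :=
  Rinf (fun p => Hminus H p0 p = Rmax a (Amin H)).

(* ---------- vectors of R^N, coded as nat -> R, coordinates 0..N-1 ---------- *)
Definition upd (p : nat -> R) (a : nat) (t : R) : nat -> R :=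
  fun b => if Nat.eqb b a then t else p b.

Fixpoint sumN (N : nat) (f : nat -> R) : R :=
  match N with O => 0 | S n => sumN n f + f n end.

Definition negpart (r : R) : R := Rmax (- r) 0.

Definition closeN (N : nat) (p q : nat -> R) (d : R) : Prop :=
  forall a, (a < N)%nat -> Rabs (q a - p a) < d.

Definition continuousN (N : nat) (G : (nat -> R) -> R) : Prop :=
  forall p eps, 0 < eps -> exists del, 0 < del /\
    forall q, closeN N p q del -> Rabs (G q - G p) < eps.

Definition closedN (N : nat) (A : (nat -> R) -> Prop) : Prop :=
  forall p, ~ A p -> exists eps, 0 < eps /\ forall q, closeN N p q eps -> ~ A q.

Definition C1N (N : nat) (G : (nat -> R) -> R) : Prop :=
  exists dG : nat -> (nat -> R) -> R,
    forall a, (a < N)%nat ->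
      (forall p, derivable_pt_lim (fun t => G (upd p a t)) (p a) (dG a p)) /\
      continuousN N (dG a).

Definition piecewise_C1 (N : nat) (F : (nat -> R) -> R) : Prop :=
  continuousN N F /\
  exists l : list (((nat -> R) -> Prop) * ((nat -> R) -> R)),
    (forall p, exists A G, In (A, G) l /\ A p) /\
    (forall A G, In (A, G) l ->
       closedN N A /\ C1N N G /\ forall p, A p -> F p = G p).

Definition depends_on_first (N : nat) (F : (nat -> R) -> R) : Prop :=
  forall p q, (forall a, (a < N)%nat -> p a = q a) -> F p = F q.
Definition strictly_decreasing_each (N : nat) (F : (nat -> R) -> R) : Prop :=
  forall p a t, (a < N)%nat -> p a < t -> F (upd p a t) < F p.
Definition F_coercive (N : nat) (F : (nat -> R) -> R) : Prop :=
  forall M, exists Rr, forall p, Rr < sumN N (fun a => negpart (p a)) -> M < F p.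

(* U a i = U_i^{a+1} : branch a in 0..N-1, grid index i >= 0 *)
Definition pplus (U : nat -> nat -> R) (dx : R) (a i : nat) : R :=
  (U a (S i) - U a i) / dx.
Definition pminus (U : nat -> nat -> R) (dx : R) (a i : nat) : R :=
  (U a i - U a (pred i)) / dx.

(* Main.v *)
Require Import Defs.
From Stdlib Require Import Reals Lra Lia ClassicalEpsilon.
Open Scope R_scope.

Lemma Rsup_ge (S : R -> Prop) M q :
  (forall x, S x -> x <= M) -> S q -> q <= Rsup S.
Proof.
  intros HM Hq.
  destruct (completeness S) as [m Hm].
  - exists M; intros x Hx; auto.
  - exists q; auto.
  - unfold Rsup.
    assert (Hl : is_lub S (epsilon (inhabits 0) (fun l => is_lub S l))).
    { apply epsilon_spec; exists m; auto. }
    destruct Hl as [Hub _]. apply Hub; auto.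
Qed.

Lemma lip_cont (g : R -> R) L :
  (forall x y, Rabs (g x - g y) <= L * Rabs (x - y)) -> continuity g.
Proof.
  intros Hl.
  assert (HL : 0 <= L).
  { pose proof (Hl 1 0). pose proof (Rabs_pos (g 1 - g 0)).
    replace (1 - 0) with 1 in H by ring. rewrite Rabs_R1 in H. lra. }
  intros x eps Heps.
  exists (eps / (L + 1)). split.
  - apply Rdiv_lt_0_compat; lra.
  - intros y [_ Hy]. simpl in *. unfold R_dist in *.
    pose proof (Hl y x).
    assert (L * Rabs (y - x) <= L * (eps / (L + 1))).
    { apply Rmult_le_compat_l; lra. }
    assert (L * (eps / (L + 1)) < eps).
    { unfold Rdiv. rewrite <- Rmult_assoc.
      apply (Rmult_lt_reg_r (L + 1)); [lra|].
      rewrite Rmult_assoc, Rinv_l by lra. nra. }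
    lra.
Qed.

Lemma ivt_up (g : R -> R) (gc : continuity g) p c b :
  g p <= c -> p <= b -> c < g b -> exists q, p <= q /\ g q = c.
Proof.
  intros H1 H2 H3.
  destruct (Req_dec (g p) c) as [E|E]. { exists p; split; lra. }
  assert (C : continuity (fun x => g x - c)).
  { intro x. apply (continuity_pt_minus g (fun _ => c)); [apply gc|].
    apply continuity_pt_const. intros u v; reflexivity. }
  assert (p < b) by (destruct (Req_dec p b); subst; lra).
  destruct (IVT (fun x => g x - c) p b C) as [z [Hz1 Hz2]]; try lra.
  exists z; split; lra.
Qed.

Lemma ivt_down (g : R -> R) (gc : continuity g) p c b :
  g p <= c -> b <= p -> c < g b -> exists q, q <= p /\ g q = c.
Proof.
  intros H1 H2 H3.
  destruct (Req_dec (g p) c) as [E|E]. { exists p; split; lra. }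
  assert (C : continuity (fun x => c - g x)).
  { intro x. apply (continuity_pt_minus (fun _ => c) g); [|apply gc].
    apply continuity_pt_const. intros u v; reflexivity. }
  assert (b < p) by (destruct (Req_dec p b); subst; lra).
  destruct (IVT (fun x => c - g x) b p C) as [z [Hz1 Hz2]]; try lra.
  exists z; split; lra.
Qed.

Lemma Rmax_lip x y p0 : Rabs (Rmax x p0 - Rmax y p0) <= Rabs (x - y).
Proof.
  pose proof (Rle_abs (x - y)). pose proof (Rle_abs (-(x - y))).
  rewrite Rabs_Ropp in H0.
  apply Rabs_le. unfold Rmax; destruct (Rle_dec x p0), (Rle_dec y p0); lra.
Qed.

Lemma Rmin_lip x y p0 : Rabs (Rmin x p0 - Rmin y p0) <= Rabs (x - y).
Proof.
  pose proof (Rle_abs (x - y)). pose proof (Rle_abs (-(x - y))).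
  rewrite Rabs_Ropp in H0.
  apply Rabs_le. unfold Rmin; destruct (Rle_dec x p0), (Rle_dec y p0); lra.
Qed.

Lemma lip_nonneg (h : R -> R) L :
  (forall x y, Rabs (h x - h y) <= L * Rabs (x - y)) -> 0 <= L.
Proof.
  intros Hl. pose proof (Hl 1 0). pose proof (Rabs_pos (h 1 - h 0)).
  replace (1 - 0) with 1 in H by ring. rewrite Rabs_R1 in H. lra.
Qed.

Lemma pi_plus_ge (h : R -> R) p0 K p :
  Lipschitz h -> coercive h -> Hplus h p0 p <= K -> p <= pi_plus h p0 K.
Proof.
  intros [L Hl] Hc Hp. unfold pi_plus.
  set (c := Rmax K (Amin h)).
  assert (Hpc : Hplus h p0 p <= c) by (unfold c; pose proof (Rmax_l K (Amin h)); lra).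
  destruct (Hc c) as [Rr HR].
  set (B := Rmax (Rmax Rr p0) 0).
  assert (HB : forall x, B < x -> c < Hplus h p0 x).
  { intros x Hx. unfold Hplus.
    assert (Rr <= B /\ p0 <= B /\ 0 <= B) as [? [? ?]].
    { unfold B. pose proof (Rmax_l (Rmax Rr p0) 0). pose proof (Rmax_r (Rmax Rr p0) 0).
      pose proof (Rmax_l Rr p0). pose proof (Rmax_r Rr p0). lra. }
    rewrite Rmax_left by lra. apply HR. rewrite Rabs_right; lra. }
  assert (gc : continuity (Hplus h p0)).
  { apply (lip_cont _ L). intros x y. unfold Hplus.
    eapply Rle_trans; [apply Hl|]. apply Rmult_le_compat_l.
    - eapply lip_nonneg; eauto.
    - apply Rmax_lip. }
  destruct (ivt_up _ gc p c (Rmax B p + 1)) as [q [Hq1 Hq2]]; auto.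
  - pose proof (Rmax_r B p); lra.
  - apply HB. pose proof (Rmax_l B p); lra.
  - apply Rle_trans with q; auto. apply (Rsup_ge _ B); auto.
    intros x Hx. destruct (Rle_dec x B); auto.
    exfalso. pose proof (HB x). fold c in Hx. lra.
Qed.

Lemma pi_minus_le (h : R -> R) p0 K p :
  Lipschitz h -> coercive h -> Hminus h p0 p <= K -> pi_minus h p0 K <= p.
Proof.
  intros [L Hl] Hc Hp. unfold pi_minus, Rinf.
  set (c := Rmax K (Amin h)).
  assert (Hpc : Hminus h p0 p <= c) by (unfold c; pose proof (Rmax_l K (Amin h)); lra).
  destruct (Hc c) as [Rr HR].
  set (B := Rmax (Rmax Rr (- p0)) 0).
  assert (HB : forall x, x < - B -> c < Hminus h p0 x).
  { intros x Hx. unfold Hminus.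
    assert (Rr <= B /\ - p0 <= B /\ 0 <= B) as [? [? ?]].
    { unfold B. pose proof (Rmax_l (Rmax Rr (-p0)) 0). pose proof (Rmax_r (Rmax Rr (-p0)) 0).
      pose proof (Rmax_l Rr (-p0)). pose proof (Rmax_r Rr (-p0)). lra. }
    rewrite Rmin_left by lra. apply HR. rewrite Rabs_left; lra. }
  assert (gc : continuity (Hminus h p0)).
  { apply (lip_cont _ L). intros x y. unfold Hminus.
    eapply Rle_trans; [apply Hl|]. apply Rmult_le_compat_l.
    - eapply lip_nonneg; eauto.
    - apply Rmin_lip. }
  destruct (ivt_down _ gc p c (- (Rmax B (- p) + 1))) as [q [Hq1 Hq2]]; auto.
  - pose proof (Rmax_r B (-p)); lra.
  - apply HB. pose proof (Rmax_l B (-p)); lra.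
  - cut (- q <= Rsup (fun x => Hminus h p0 (- x) = c)); [lra|].
    apply (Rsup_ge _ B).
    + intros x Hx. destruct (Rle_dec x B); auto.
      exfalso. pose proof (HB (- x)). lra.
    + rewrite Ropp_involutive. auto.
Qed.

Theorem proposition3p3
  (N : nat) (HN : (1 <= N)%nat)
  (H : nat -> R -> R) (p0 : nat -> R)
  (H_lip : forall a, (a < N)%nat -> Lipschitz (H a))
  (H_coer : forall a, (a < N)%nat -> coercive (H a))
  (H_qc : forall a, (a < N)%nat -> quasi_convex (H a))
  (H_dec : forall a, (a < N)%nat -> nonincreasing_on_le (H a) (p0 a))
  (H_inc : forall a, (a < N)%nat -> nondecreasing_on_ge (H a) (p0 a))
  (F : (nat -> R) -> R)
  (F_dep : depends_on_first N F)
  (F_pw : piecewise_C1 N F)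
  (F_decr : strictly_decreasing_each N F)
  (F_coer : F_coercive N F)
  (plow : R -> nat -> R)
  (plow_spec : forall K p, F p <= K -> forall a, (a < N)%nat -> plow K a <= p a)
  (dx dt : R) (Hdx : 0 < dx) (Hdt : 0 < dt)
  (U V : nat -> nat -> R) (U0 V0 : R)
  (HU0 : forall a, (a < N)%nat -> U a O = U0)
  (HV0 : forall a, (a < N)%nat -> V a O = V0)
  (Sbranch : forall a i, (a < N)%nat -> (1 <= i)%nat ->
     (V a i - U a i) / dt
       + Rmax (Hplus (H a) (p0 a) (pminus U dx a i))
              (Hminus (H a) (p0 a) (pplus U dx a i)) = 0)
  (Sjunction : (V0 - U0) / dt + F (fun a => pplus U dx a O) = 0)
  (K : R)
  (HK : forall a i, (a < N)%nat -> K <= (V a i - U a i) / dt) :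
  (forall a i, (a < N)%nat -> (1 <= i)%nat ->
     pi_minus (H a) (p0 a) (- K) <= pplus U dx a i <= pi_plus (H a) (p0 a) (- K))
  /\
  (forall a, (a < N)%nat ->
     plow (- K) a <= pplus U dx a O <= pi_plus (H a) (p0 a) (- K)).
Proof.
  assert (Hp : forall a i, (a < N)%nat -> Hplus (H a) (p0 a) (pplus U dx a i) <= - K).
  { intros a i Ha. pose proof (Sbranch a (S i) Ha ltac:(lia)).
    pose proof (HK a (S i) Ha).
    pose proof (Rmax_l (Hplus (H a) (p0 a) (pminus U dx a (S i)))
                       (Hminus (H a) (p0 a) (pplus U dx a (S i)))).
    change (pminus U dx a (S i)) with (pplus U dx a i) in *. lra. }
  split.
  - intros a i Ha Hi. split.
    + apply pi_minus_le; auto.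
      pose proof (Sbranch a i Ha Hi). pose proof (HK a i Ha).
      pose proof (Rmax_r (Hplus (H a) (p0 a) (pminus U dx a i))
                         (Hminus (H a) (p0 a) (pplus U dx a i))). lra.
    + apply pi_plus_ge; auto.
  - intros a Ha. split.
    + apply (plow_spec (- K) (fun a => pplus U dx a O)); auto.
      pose proof (HK a O Ha). rewrite HU0, HV0 in H0 by auto. lra.
    + apply pi_plus_ge; auto.
Qed.
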